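(* Let $\kappa\ge2$ and let $\psi^+$ be the rooted balanced 4-taxon tree $((a,b),(c,d))$. Then $$d_\kappa(\psi^+)=\left(\frac{\kappa^2+\kappa}{2}\right)^2-\binom{\kappa}{2}-1=\frac{\kappa(\kappa^3+2\kappa^2-\kappa+2)}{4}-1.$$ In particular this differs from the dimension $\frac{\kappa^4+\kappa}{2}-1$ for the rooted 4-taxon caterpillar, so $d_\kappa$ depends on the rooted topology and not only on the number of taxa.
   Context: For a rooted binary topological tree $\psi^+$ on $X$, $d_\kappa(\psi^+)$ is the dimension of the affine space of real $|X|$-way $\kappa\times\cdots\times\kappa$ tensors $P$ (one index per taxon) whose entries sum to 1 and such that for every $Y\subseteq X$ and every 2-clade $\{x,y\}$ of the induced rooted subtree $\psi^+|_Y$, the marginalization $P_Y$ is invariant under exchanging the $x$ and $y$ indices. A 2-clade is a pair of leaves that are exactly the leaf descendants of some vertex. *)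

(* Defs.v *)
From HB Require Import structures.
From mathcomp Require Import all_boot all_order all_algebra all_fingroup.
From mathcomp Require Import reals.
Set Implicit Arguments. Unset Strict Implicit. Unset Printing Implicit Defensive.
Import Order.TTheory GRing.Theory Num.Theory.
Local Open Scope ring_scope.

(* A rooted (binary) topological tree on a finite taxon set X is encoded by
   its set of clusters (leaf-descendant sets of its vertices). *)
Definition rtree (X : finType) := {set {set X}}.

(* {x,y} is a 2-clade of the induced rooted subtree psi|_Y: the clusters of
   psi|_Y are exactly the nonempty sets C :&: Y for C a cluster of psi. *)
Definition is_2clade (X : finType) (psi : rtree X) (Y : {set X}) (x y : X) : Prop :=
  x != y /\ exists2 C, C \in psi & C :&: Y = [set x; y].

Definition assign (X : finType) (k : nat) := {ffun X -> 'I_k}.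

Definition tensor (R : realType) (X : finType) (k : nat) :=
  {ffun assign X k -> R^o}.

(* The marginalization P_Y, viewed as a function of the full assignment that
   only depends on the coordinates in Y. *)
Definition marg (R : realType) (X : finType) (k : nat) (Y : {set X})
  (P : tensor R X k) (f : assign X k) : R :=
  \sum_(g : assign X k | [forall z in Y, g z == f z]) P g.

Definition swap_idx (X : finType) (k : nat) (x y : X) (f : assign X k) : assign X k :=
  [ffun z => f (tperm x y z)].

Definition dk_tensors (R : realType) (X : finType) (k : nat) (psi : rtree X)
  (P : tensor R X k) : Prop :=
  (\sum_f P f = 1) /\
  forall (Y : {set X}) (x y : X), is_2clade psi Y x y ->
    forall f, marg Y P f = marg Y P (swap_idx x y f).

Definition affine_dim (R : realType) (V : vectType R) (S : V -> Prop) (d : nat) : Prop :=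
  exists P0 : V, exists U : {vspace V},
    [/\ S P0, (forall P, S P <-> (P - P0) \in U) & \dim U = d].

Definition dk_is (R : realType) (X : finType) (k : nat) (psi : rtree X) (d : nat) : Prop :=
  affine_dim (@dk_tensors R X k psi) d.

Definition ta : 'I_4 := @inord 3 0.
Definition tb : 'I_4 := @inord 3 1.
Definition tc : 'I_4 := @inord 3 2.
Definition td : 'I_4 := @inord 3 3.
Definition balanced4 : rtree 'I_4 :=
  [set [set: 'I_4]; [set ta; tb]; [set tc; td]] :|: [set [set i] | i : 'I_4].

(* Main.v *)
Require Import Defs.
From HB Require Import structures.
From mathcomp Require Import all_boot all_order all_algebra all_fingroup.
From mathcomp Require Import reals.
From mathcomp Require Import ring zify.

Lemma sum_lt (k j : nat) : (j <= k)%N -> \sum_(i < k) ((i < j)%N : nat) = j.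
Proof.
move=> hj; rewrite -(big_mkord xpredT (fun i => ((i < j)%N : nat))).
rewrite (@big_cat_nat _ _ _ j) //=.
rewrite (eq_big_nat _ _ (F2 := fun _ => 1%N)); last by move=> i /andP[_ ->].
rewrite [X in (_ + X)%N](eq_big_nat _ _ (F2 := fun _ => 0%N)); last first.
  by move=> i /andP[h _]; rewrite ltnNge h.
by rewrite !sum_nat_const_nat muln1 muln0 addn0 subn0.
Qed.

Lemma cardK (k : nat) : #|{: {p : 'I_k * 'I_k | (p.1 < p.2)%N}}| = 'C(k, 2).
Proof.
rewrite card_sig -sum1_card big_mkcond /=.
rewrite -(pair_big xpredT xpredT (fun (i j : 'I_k) => if (i < j)%N then 1%N else 0%N)) /=.
rewrite exchange_big /=.
rewrite (eq_bigr (fun j : 'I_k => (j : nat))); last first.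
  move=> j _; rewrite -[RHS](@sum_lt k j (ltnW (ltn_ord j))).
  by apply: eq_bigr => i _; case: ltnP.
by rewrite -(big_mkord xpredT (fun j => j)) bin2_sum.
Qed.

Lemma cardQ (k : nat) : #|{: {p : 'I_k * 'I_k | (p.1 <= p.2)%N}}| = ('C(k, 2) + k)%N.
Proof.
rewrite card_sig -sum1_card big_mkcond /=.
rewrite -(pair_big xpredT xpredT (fun (i j : 'I_k) => if (i <= j)%N then 1%N else 0%N)) /=.
rewrite exchange_big /=.
rewrite (eq_bigr (fun j : 'I_k => (j : nat) + 1)%N); last first.
  move=> j _; rewrite addn1 -[in RHS](@sum_lt k j.+1 (ltn_ord j)).
  by apply: eq_bigr => i _; rewrite ltnS; case: leqP.
rewrite big_split /= sum1_card card_ord.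
by rewrite -(big_mkord xpredT (fun j => j)) bin2_sum.
Qed.

Lemma bin2_2 n : (2 * 'C(n, 2) = n * n.-1)%N.
Proof.
elim: n => [|n IH] //; rewrite binS bin1 /= mulnDr IH.
case: n {IH} => //= n; lia.
Qed.

Lemma arith (k : nat) (hk : (2 <= k)%N) :
  ((k ^ 2 + k) %/ 2 = 'C(k, 2) + k)%N /\
  ((((k ^ 2 + k) %/ 2) ^ 2 - 'C(k, 2)) - 1 =
     (k * (k ^ 3 + 2 * k ^ 2 - k + 2)) %/ 4 - 1)%N /\
  ((((k ^ 2 + k) %/ 2) ^ 2 - 'C(k, 2)) - 1 <> (k ^ 4 + k) %/ 2 - 1)%N.
Proof.
have h2 := bin2_2 k.
move: ('C(k, 2)) h2 => m h2.
have e1 : ((k ^ 2 + k) %/ 2 = m + k)%N.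
  have -> : (k ^ 2 + k = 2 * (m + k))%N.
    case: k hk h2 => // k' _ /= h2; rewrite mulnDr h2; lia.
  by rewrite mulKn.
split => //; rewrite e1.
have e2 : (k * (k ^ 3 + 2 * k ^ 2 - k + 2) = 4 * ((m + k) ^ 2 - m))%N.
  case: k hk h2 {e1} => // k' _ /= h2. nia.
split; first by rewrite e2 mulKn.
have e3 : (2 * ((k ^ 4 + k) %/ 2) + 1 >= k ^ 4 + k)%N.
  have := divn_eq (k ^ 4 + k) 2; have := @ltn_pmod (k ^ 4 + k) 2 isT; lia.
case: k hk h2 {e1} e2 e3 => // k' hk /= h2 e2 e3. nia.
Qed.

Set Implicit Arguments. Unset Strict Implicit. Unset Printing Implicit Defensive.
Import Order.TTheory GRing.Theory Num.Theory.
Local Open Scope ring_scope.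

Lemma I4P (z : 'I_4) : [\/ z = ta, z = tb, z = tc | z = td].
Proof.
case: z => [[|[|[|[|n]]]] Hz] //.
- by apply: Or41; apply/val_inj; rewrite /= inordK.
- by apply: Or42; apply/val_inj; rewrite /= inordK.
- by apply: Or43; apply/val_inj; rewrite /= inordK.
- by apply: Or44; apply/val_inj; rewrite /= inordK.
Qed.

Lemma tneq :
  ((ta == tb) = false) * ((ta == tc) = false) * ((ta == td) = false) *
  ((tb == ta) = false) * ((tb == tc) = false) * ((tb == td) = false) *
  ((tc == ta) = false) * ((tc == tb) = false) * ((tc == td) = false) *
  ((td == ta) = false) * ((td == tb) = false) * ((td == tc) = false).
Proof. by rewrite -!val_eqE /= !inordK. Qed.

Lemma tpermE' (x y z : 'I_4) : x != z -> y != z -> tperm x y z = z.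
Proof. exact: tpermD. Qed.

Section Core.
Variables (R : realType) (k : nat).
Local Notation A4 := (assign 'I_4 k).
Local Notation V := (tensor R 'I_4 k).

Definition mpair (x y : 'I_4) (P : V) (i j : 'I_k) : R :=
  \sum_(g : A4 | (g x == i) && (g y == j)) P g.

Lemma swapE (x y z : 'I_4) (f : A4) : swap_idx x y f z = f (tperm x y z).
Proof. by rewrite ffunE. Qed.

Lemma swapK (x y : 'I_4) : involutive (@swap_idx 'I_4 k x y).
Proof. by move=> f; apply/ffunP => z; rewrite !swapE tpermK. Qed.

Lemma mpair_swap (u v x y : 'I_4) (P : V) i j :
  (forall g, P (swap_idx u v g) = P g) ->
  mpair x y P i j = mpair (tperm u v x) (tperm u v y) P i j.
Proof.
move=> HP; rewrite /mpair (reindex_inj (inv_inj (@swapK u v))) /=.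
by apply: eq_big => [g|g _]; rewrite ?HP // !swapE.
Qed.

Lemma mpairC x y (P : V) i j : mpair x y P i j = mpair y x P j i.
Proof. by apply: eq_bigl => g; rewrite andbC. Qed.

Lemma marg_pair x y (P : V) f : marg [set x; y] P f = mpair x y P (f x) (f y).
Proof.
apply: eq_bigl => g; apply/forall_inP/andP => [H|[/eqP H1 /eqP H2] z].
  by split; apply: H; rewrite !inE eqxx ?orbT.
by rewrite !inE => /orP[] /eqP ->; rewrite ?H1 ?H2.
Qed.

Lemma margT (P : V) f : marg [set: 'I_4] P f = P f.
Proof.
rewrite /marg (big_pred1 f) // => g /=; apply/forall_inP/eqP => [H|->//].
by apply/ffunP => z; apply/eqP/H; rewrite inE.
Qed.

Lemma marg_stable (u v : 'I_4) (Y : {set 'I_4}) (P : V) f :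
  u \in Y -> v \in Y -> (forall g, P (swap_idx u v g) = P g) ->
  marg Y P (swap_idx u v f) = marg Y P f.
Proof.
move=> uY vY HP; rewrite /marg (reindex_inj (inv_inj (@swapK u v))) /=.
have tY w : w \in Y -> tperm u v w \in Y by case: tpermP => // ->.
apply: eq_big => [g|g _]; last by rewrite HP.
apply/forall_inP/forall_inP => H z zY.
  by have := H _ (tY _ zY); rewrite !swapE tpermK.
by rewrite !swapE; apply: H; apply: tY.
Qed.


Definition inv2 (u v : 'I_4) (P : V) := forall g, P (swap_idx u v g) = P g.
Definition symp (x y : 'I_4) (P : V) := forall i j, mpair x y P i j = mpair x y P j i.

Lemma symp_swap u v x y (P : V) : inv2 u v P ->
  symp (tperm u v x) (tperm u v y) P -> symp x y P.
Proof. by move=> HP H i j; rewrite (@mpair_swap u v x y P i j HP) (@mpair_swap u v x y P j i HP). Qed.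

Lemma sympC x y (P : V) : symp x y P -> symp y x P.
Proof. by move=> H i j; rewrite mpairC H mpairC. Qed.

Lemma tp1 : tperm ta tb tc = tc. Proof. by rewrite tpermD // tneq. Qed.
Lemma tp2 : tperm ta tb td = td. Proof. by rewrite tpermD // tneq. Qed.
Lemma tp3 : tperm tc td ta = ta. Proof. by rewrite tpermD // tneq. Qed.
Lemma tp4 : tperm tc td tb = tb. Proof. by rewrite tpermD // tneq. Qed.

Lemma pair_sym (P : V) : inv2 ta tb P -> inv2 tc td P -> symp ta tc P ->
  forall x y, x != y -> symp x y P.
Proof.
move=> Hab Hcd Hac.
have Sab : symp ta tb P.
  by move=> i j; rewrite (@mpair_swap ta tb ta tb P i j Hab) tpermL tpermR mpairC.
have Scd : symp tc td P.
  by move=> i j; rewrite (@mpair_swap tc td tc td P i j Hcd) tpermL tpermR mpairC.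
have Sbc : symp tb tc P by apply: (symp_swap Hab); rewrite tpermR tp1.
have Sad : symp ta td P by apply: (symp_swap Hcd); rewrite tpermR tp3.
have Sbd : symp tb td P by apply: (symp_swap Hab); rewrite tpermR tp2.
move=> x y; case: (I4P x) => ->; case: (I4P y) => ->; rewrite ?eqxx ?tneq => // _.
all: try assumption.
all: by apply: sympC.
Qed.

Lemma inB C : C \in balanced4 ->
  [\/ C = [set: 'I_4], C = [set ta; tb], C = [set tc; td] | exists i, C = [set i]].
Proof.
rewrite /balanced4 !inE -!orbA => /or4P[].
- by move/eqP => ->; constructor.
- by move/eqP => ->; constructor.
- by move/eqP => ->; constructor.
- by case/imsetP => i _ ->; apply: Or44; exists i.
Qed.

Lemma inB1 : [set ta; tb] \in balanced4.
Proof. by rewrite /balanced4 !inE eqxx ?orbT. Qed.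
Lemma inB2 : [set tc; td] \in balanced4.
Proof. by rewrite /balanced4 !inE eqxx ?orbT. Qed.
Lemma inB3 : [set: 'I_4] \in balanced4.
Proof. by rewrite /balanced4 !inE eqxx ?orbT. Qed.

Lemma swap_idxC (x y : 'I_4) (f : A4) : swap_idx x y f = swap_idx y x f.
Proof. by rewrite /swap_idx tpermC. Qed.

Lemma cherry_case u v (Y : {set 'I_4}) x y (P : V) : u != v -> inv2 u v P ->
  [set u; v] :&: Y = [set x; y] -> x != y ->
  forall f, marg Y P f = marg Y P (swap_idx x y f).
Proof.
move=> uv HP CY xy f.
have xin : x \in [set u; v] :&: Y by rewrite CY !inE eqxx.
have yin : y \in [set u; v] :&: Y by rewrite CY !inE eqxx orbT.
move: xin yin; rewrite !inE => /andP[xuv xY] /andP[yuv yY].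
move: xuv yuv xy xY yY; case/orP => /eqP -> /orP[] /eqP ->; rewrite ?eqxx // => _ uY vY.
  by rewrite (marg_stable _ uY vY HP).
by rewrite swap_idxC (marg_stable _ vY uY HP).
Qed.

Lemma dk_char (P : V) : dk_tensors balanced4 P <->
  [/\ \sum_f P f = 1, inv2 ta tb P, inv2 tc td P & symp ta tc P].
Proof.
split.
  case=> Hs H; split => //.
  - move=> g; have := H [set: 'I_4] ta tb _ g; rewrite !margT => -> //.
    by split; [rewrite tneq | exists [set ta; tb]; [exact: inB1 | rewrite setIT]].
  - move=> g; have := H [set: 'I_4] tc td _ g; rewrite !margT => -> //.
    by split; [rewrite tneq | exists [set tc; td]; [exact: inB2 | rewrite setIT]].
  - move=> i j; pose f : A4 := [ffun z => if z == ta then i else j].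
    have := H [set ta; tc] ta tc _ f; rewrite !marg_pair !swapE tpermL tpermR.
    rewrite /f !ffunE eqxx tneq => -> //.
    by split; [rewrite tneq | exists [set: 'I_4]; [exact: inB3 | rewrite setTI]].
case=> Hs Hab Hcd Hac; split => // Y x y [xy [C CB CY]] f.
case: (inB CB) => [E|E|E|[i E]]; subst C.
- rewrite setTI in CY; subst Y.
  rewrite !marg_pair !swapE tpermL tpermR; exact: pair_sym.
- by apply: (cherry_case _ Hab CY xy); rewrite tneq.
- by apply: (cherry_case _ Hcd CY xy); rewrite tneq.
- have : x \in [set i] :&: Y by rewrite CY !inE eqxx.
  have : y \in [set i] :&: Y by rewrite CY !inE eqxx orbT.
  rewrite !inE => /andP[/eqP yi _] /andP[/eqP xi _]; by rewrite xi yi eqxx in xy.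
Qed.

End Core.

Section Lin.
Variables (R : realType) (k : nat).
Local Notation A4 := (assign 'I_4 k).
Local Notation V := (tensor R 'I_4 k).

Definition Qt := {p : 'I_k * 'I_k | (p.1 <= p.2)%N}.
Definition Kt := {p : 'I_k * 'I_k | (p.1 < p.2)%N}.
Definition Jt := (Qt * Qt)%type.

Definition qp (i j : 'I_k) : 'I_k * 'I_k := if (i <= j)%N then (i, j) else (j, i).
Lemma qp_le i j : ((qp i j).1 <= (qp i j).2)%N.
Proof. by rewrite /qp; case: (leqP i j) => //= /ltnW. Qed.
Definition q i j : Qt := exist _ (qp i j) (qp_le i j).

Lemma qC i j : q i j = q j i.
Proof.
apply/val_inj; rewrite /= /qp; case: (leqP i j) => h1; case: (leqP j i) => h2 //.
  have e : i = j by apply/val_inj/anti_leq; rewrite h1 h2.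
  by rewrite e.
by move: (ltn_trans h1 h2); rewrite ltnn.
Qed.

Definition r (f : A4) : Jt := (q (f ta) (f tb), q (f tc) (f td)).

Definition mk4 (x1 x2 x3 x4 : 'I_k) : A4 :=
  [ffun z => if z == ta then x1 else if z == tb then x2 else if z == tc then x3 else x4].
Lemma mk4E x1 x2 x3 x4 :
  (mk4 x1 x2 x3 x4 ta = x1) * (mk4 x1 x2 x3 x4 tb = x2) *
  (mk4 x1 x2 x3 x4 tc = x3) * (mk4 x1 x2 x3 x4 td = x4).
Proof. by rewrite !ffunE !eqxx !tneq. Qed.

Definition sec (x : Jt) : A4 := mk4 (val x.1).1 (val x.1).2 (val x.2).1 (val x.2).2.

Lemma r_sec x : r (sec x) = x.
Proof.
case: x => [[[i1 j1] h1] [[i2 j2] h2]]; rewrite /r /sec /= !mk4E.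
by congr pair; apply/val_inj; rewrite /= /qp /= ?h1 ?h2.
Qed.

Lemma ffun4 (f g : A4) : f ta = g ta -> f tb = g tb -> f tc = g tc -> f td = g td -> f = g.
Proof. by move=> e1 e2 e3 e4; apply/ffunP => z; case: (I4P z) => ->. Qed.

Lemma sec_r (P : V) f : inv2 ta tb P -> inv2 tc td P -> P (sec (r f)) = P f.
Proof.
move=> Hab Hcd; rewrite /sec /r /= /qp.
case: (leqP (f ta) (f tb)) => h1; case: (leqP (f tc) (f td)) => h2 /=.
- by congr (P _); apply: ffun4; rewrite !mk4E.
- rewrite -(Hcd f); congr (P _); apply: ffun4; rewrite !mk4E !swapE ?tpermL ?tpermR ?tp3 ?tp4 //.
- rewrite -(Hab f); congr (P _); apply: ffun4; rewrite !mk4E !swapE ?tpermL ?tpermR ?tp1 ?tp2 //.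
- rewrite -(Hab f) -(Hcd (swap_idx ta tb f)); congr (P _); apply: ffun4;
    rewrite !mk4E !swapE ?tpermL ?tpermR ?tp1 ?tp2 ?tp3 ?tp4 ?tpermL ?tpermR //.
Qed.

Definition gmap (h : {ffun Jt -> R^o}) : V := [ffun f => h (r f)].
Lemma gmap_lin : linear gmap.
Proof. by move=> a u v; apply/ffunP => f; rewrite !ffunE. Qed.
HB.instance Definition _ := GRing.isLinear.Build R {ffun Jt -> R^o} V *:%R gmap gmap_lin.
Definition gL := linfun gmap.

Lemma memSym (P : V) : (P \in limg gL) <-> inv2 ta tb P /\ inv2 tc td P.
Proof.
split.
  case/memv_imgP => u _ ->; rewrite lfunE /=.
  split => g; rewrite !ffunE; congr (u _); rewrite /r !swapE ?tpermL ?tpermR ?tp1 ?tp2 ?tp3 ?tp4;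
    congr pair; apply: qC.
case=> H1 H2; apply/memv_imgP; exists [ffun x => P (sec x)]; first exact: memvf.
by apply/ffunP => f; rewrite lfunE /= !ffunE sec_r.
Qed.

Lemma gL_inj : lker gL == 0%VS.
Proof.
apply/lker0P => u v E; apply/ffunP => x.
have := congr1 (fun P : V => P (sec x)) E; rewrite /= !lfunE /= !ffunE r_sec //.
Qed.

Lemma dimSym : \dim (limg gL) = (#|{: Qt}| * #|{: Qt}|)%N.
Proof.
by rewrite limg_dim_eq ?(eqP gL_inj) ?capv0 // dimvf /dim /= muln1 card_prod.
Qed.


Lemma mpairL x y (a : R) (u v : V) i j :
  mpair x y (a *: u + v) i j = a * mpair x y u i j + mpair x y v i j.
Proof. by rewrite /mpair mulr_sumr -big_split; apply: eq_bigr => g _; rewrite !ffunE. Qed.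

Definition Amap (P : V) : {ffun 'I_k * 'I_k -> R^o} :=
  [ffun ij => mpair ta tc P ij.1 ij.2 - mpair ta tc P ij.2 ij.1].
Lemma Amap_lin : linear Amap.
Proof.
move=> a u v; apply/ffunP => ij; rewrite !ffunE !mpairL.
by rewrite /GRing.scale /=; ring.
Qed.
HB.instance Definition _ := GRing.isLinear.Build R V {ffun 'I_k * 'I_k -> R^o} *:%R Amap Amap_lin.
Definition AL := linfun Amap.

Definition smap (P : V) : R^o := \sum_f P f.
Lemma smap_lin : linear smap.
Proof.
move=> a u v; change (\sum_f (a *: u + v) f = a * (\sum_f u f) + \sum_f v f).
by rewrite mulr_sumr -big_split; apply: eq_bigr => g _; rewrite !ffunE.
Qed.
HB.instance Definition _ := GRing.isLinear.Build R V R^o *:%R smap smap_lin.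
Definition sL := linfun smap.

Definition aw (h : {ffun Kt -> R^o}) (ij : 'I_k * 'I_k) : R :=
  if insub ij is Some p then h p else 0.
Definition amap (h : {ffun Kt -> R^o}) : {ffun 'I_k * 'I_k -> R^o} :=
  [ffun ij => aw h ij - aw h (ij.2, ij.1)].
Lemma aw_lin a u v ij : aw (a *: u + v) ij = a * aw u ij + aw v ij.
Proof. by rewrite /aw; case: insubP => [p _ _|_]; rewrite ?ffunE //; ring. Qed.
Lemma amap_lin : linear amap.
Proof.
move=> a u v; apply/ffunP => ij; rewrite !ffunE !aw_lin.
by rewrite /GRing.scale /=; ring.
Qed.
HB.instance Definition _ := GRing.isLinear.Build R {ffun Kt -> R^o} {ffun 'I_k * 'I_k -> R^o} *:%R amap amap_lin.
Definition aL := linfun amap.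

Lemma amap_val h (p : Kt) : amap h (val p) = h p.
Proof.
rewrite ffunE /aw valK; case: insubP => [p' hp' _|_]; last by rewrite subr0.
by move: (valP p) hp'; rewrite /= => h1 h2; move: (ltn_trans h1 h2); rewrite ltnn.
Qed.

Lemma aL_inj : lker aL == 0%VS.
Proof.
apply/lker0P => u v E; apply/ffunP => p.
by have := congr1 (fun M : {ffun 'I_k * 'I_k -> R^o} => M (val p)) E; rewrite /= !lfunE /= !amap_val.
Qed.

Lemma dimAnti : \dim (limg aL) = #|{: Kt}|.
Proof.
by rewrite limg_dim_eq ?(eqP aL_inj) ?capv0 // dimvf /dim /= muln1.
Qed.

Lemma Amap_in (u : V) : Amap u \in limg aL.
Proof.
apply/memv_imgP; exists [ffun p => Amap u (val p)]; first exact: memvf.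
apply/ffunP => [[i j]]; rewrite lfunE /= /amap /aw !ffunE /=.
case: (@insubP _ _ Kt (i, j)) => [p hp ep|hp]; case: (@insubP _ _ Kt (j, i)) => [p' hp' ep'|hp']; rewrite ?ffunE ?ep ?ep' /=.
- by move: hp hp'; rewrite /= => h1 h2; move: (ltn_trans h1 h2); rewrite ltnn.
- by ring.
- by ring.
- move: hp hp'; rewrite /= -!leqNgt => h1 h2.
  have e : i = j by apply/val_inj/anti_leq; rewrite h1 h2.
  by rewrite e; ring.
Qed.

Definition bmap (h : {ffun Kt -> R^o}) : V :=
  [ffun f : A4 => if (f tb == f ta) && (f td == f tc) then aw h (f ta, f tc) else 0].

Lemma mpair_b h i j : mpair ta tc (bmap h) i j = aw h (i, j).
Proof.
rewrite /mpair (bigD1 (mk4 i i j j)) /=; last by rewrite !mk4E !eqxx.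
rewrite ffunE !mk4E !eqxx /= big1 ?addr0 // => g /andP[/andP[/eqP gi /eqP gj] ne].
rewrite ffunE; case: ifP => // /andP[/eqP gb /eqP gd].
by move/negP: ne; case; apply/eqP; apply: ffun4; rewrite !mk4E // ?gb ?gd.
Qed.

Lemma bmap_sym h : inv2 ta tb (bmap h) /\ inv2 tc td (bmap h).
Proof.
split => g; rewrite !ffunE ?swapE ?tpermL ?tpermR ?tp1 ?tp2 ?tp3 ?tp4.
  case: (g tb =P g ta) => [->|ne]; first by rewrite eqxx.
  by rewrite eq_sym (introF eqP ne).
case: (g td =P g tc) => [->|ne]; first by rewrite eqxx.
by rewrite [g tc == _]eq_sym (introF eqP ne) !andbF.
Qed.

Lemma Amap_b h : Amap (bmap h) = amap h.
Proof. by apply/ffunP => [[i j]]; rewrite !ffunE !mpair_b. Qed.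

Lemma AS : (AL @: limg gL)%VS = limg aL.
Proof.
apply/eqP; rewrite eqEsubv; apply/andP; split; apply/subvP => v.
  by case/memv_imgP => u _ ->; rewrite lfunE /= Amap_in.
case/memv_imgP => h _ ->; rewrite lfunE /= -Amap_b.
have := memv_img AL (proj2 (memSym (bmap h)) (bmap_sym h)).
by rewrite lfunE.
Qed.

End Lin.

Section Fin.
Variables (R : realType) (k : nat) (hk : (1 < k)%N).
Local Notation A4 := (assign 'I_4 k).
Local Notation V := (tensor R 'I_4 k).

Definition i0 : 'I_k := Ordinal (ltnW hk).
Definition c0 : A4 := [ffun _ => i0].
Definition P0 : V := [ffun f => if f == c0 then 1 else 0].

Lemma swap_c0 u v : swap_idx u v c0 = c0.
Proof. by apply/ffunP => z; rewrite swapE !ffunE. Qed.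

Lemma P0_inv u v : inv2 u v P0.
Proof. by move=> g; rewrite !ffunE -{1}(swap_c0 u v) (can_eq (swapK u v)). Qed.

Lemma sP0 : smap P0 = 1.
Proof.
rewrite /smap (bigD1 c0) //= ffunE eqxx big1 ?addr0 // => g /negbTE gn.
by rewrite ffunE gn.
Qed.

Lemma mpairP0 i j : mpair ta tc P0 i j = if (i0 == i) && (i0 == j) then 1 else 0.
Proof.
rewrite /mpair big_mkcond (bigD1 c0) //= !ffunE eqxx big1 ?addr0 //.
by move=> g /negbTE gn; rewrite ffunE gn; case: ifP.
Qed.

Lemma AP0 : Amap P0 = 0.
Proof. by apply/ffunP => ij; rewrite !ffunE !mpairP0 andbC subrr. Qed.

Lemma P0S1 : P0 \in limg (gL R k).
Proof. by apply/memSym; split; apply: P0_inv. Qed.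

Lemma main_dk : dk_is R k balanced4 (#|{: Qt k}| * #|{: Qt k}| - #|{: Kt k}| - 1)%N.
Proof.
exists P0, (limg (gL R k) :&: lker (AL R k) :&: lker (sL R k))%VS; split.
- apply/dk_char; split; [exact: sP0 | exact: P0_inv | exact: P0_inv |].
  by move=> i j; rewrite !mpairP0 andbC.
- move=> P; rewrite dk_char !memv_cap !memv_ker !lfunE /=.
  have E1 : (P - P0 \in limg (gL R k)) = (P \in limg (gL R k)).
    apply/idP/idP => H; last exact: memvB H P0S1.
    by rewrite -(subrK P0 P); apply: memvD H P0S1.
  have E2 : (Amap (P - P0) == 0) = (Amap P == 0) by rewrite raddfB /= AP0 subr0.
  have E3 : (smap (P - P0) == 0) = (smap P == 1) by rewrite raddfB /= sP0 subr_eq0.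
  have E4 : (Amap P == 0) <-> symp ta tc P.
    split => [/eqP H i j | H].
      have := congr1 (fun M : {ffun 'I_k * 'I_k -> R^o} => M (i, j)) H.
      by rewrite !ffunE /= => /eqP; rewrite subr_eq0 => /eqP.
    by apply/eqP/ffunP => ij; rewrite !ffunE H subrr.
  rewrite E1 E2 E3; split.
    case=> hs ha hc hsy; rewrite (proj2 (memSym _) (conj ha hc)) /=.
    by rewrite (proj2 E4 hsy) /=; apply/eqP.
  case/andP => /andP[/memSym[ha hc] /E4 hsy] /eqP hs; split => //.
- set S2 := (limg (gL R k) :&: lker (AL R k))%VS.
  have d1 := limg_ker_dim (sL R k) S2.
  have d2 := limg_ker_dim (AL R k) (limg (gL R k)).
  rewrite AS dimAnti dimSym in d2.
  have d3 : \dim (sL R k @: S2) = 1%N.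
    apply/eqP; rewrite eqn_leq; apply/andP; split.
      by have := dimvS (subvf (sL R k @: S2)); rewrite dimvf /dim /=.
    rewrite lt0n dimv_eq0; apply/negP => /eqP H0.
    have HP : P0 \in S2 by rewrite memv_cap memv_ker P0S1 lfunE /= AP0 eqxx.
    have := memv_img (sL R k) HP.
    by rewrite H0 memv0 lfunE /= sP0 oner_eq0.
  rewrite -/S2 in d2 *; by rewrite -d2 -d1 d3 !addnK.
Qed.

End Fin.

Theorem mainTheorem9 (R : realType) (k : nat) (hk : (2 <= k)%N) :
  dk_is R k balanced4 ((((k ^ 2 + k) %/ 2) ^ 2 - 'C(k, 2)) - 1)%N /\
  ((((k ^ 2 + k) %/ 2) ^ 2 - 'C(k, 2)) - 1 =
     (k * (k ^ 3 + 2 * k ^ 2 - k + 2)) %/ 4 - 1)%N /\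
  ((((k ^ 2 + k) %/ 2) ^ 2 - 'C(k, 2)) - 1 <> (k ^ 4 + k) %/ 2 - 1)%N.
Proof.
have [e1 e2] := @arith k hk; split => //.
have := @main_dk R k hk; rewrite /Qt /Kt cardQ cardK -e1.
by rewrite expnS expn1.
Qed.
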